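(* For all integers $m\ge 1$ and $v\ge 1$, the Gardner–Fisher sum satisfies $$S_{m,v}=\frac{1}{(2v-1)!}\sum_{n=0}^{v-1}\left(\frac{\pi}{m}\right)^{2n}s(v,n)\,\Gamma(2v-2n)\,\zeta(2v-2n)\left(1-\frac{1}{m^{2v-2n}}\right).$$
   Context: The Gardner–Fisher sum is $S_{m,v}=\left(\frac{\pi}{2m}\right)^{2v}\sum_{k=1}^{m-1}\cos^{-2v}\!\left(\frac{k\pi}{2m}\right)=\left(\frac{\pi}{2m}\right)^{2v}\sum_{k=1}^{m-1}\sin^{-2v}\!\left(\frac{k\pi}{2m}\right)$ (empty sum $=0$). For integers $v\ge1$ and $0\le n\le v-1$, $s(v,n)$ denotes the $n$-th elementary symmetric polynomial evaluated at the $v-1$ numbers $1^2,2^2,\dots,(v-1)^2$, i.e. $s(v,n)=\sum_{1\le i_1<\dots<i_n\le v-1} i_1^2i_2^2\cdots i_n^2$, with $s(v,0)=1$. $\zeta$ is the Riemann zeta function. *)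

(* Defs.v *)
From Stdlib Require Import Reals List Arith ClassicalEpsilon.
Import ListNotations.
Open Scope R_scope.

Fixpoint sumR (l : list nat) (f : nat -> R) : R :=
  match l with
  | [] => 0
  | x :: l' => f x + sumR l' f
  end.

Fixpoint esym (l : list R) (n : nat) : R :=
  match l, n with
  | _, O => 1
  | [], S _ => 0
  | x :: l', S n' => esym l' (S n') + x * esym l' n'
  end.

Definition s_coef (v n : nat) : R :=
  esym (map (fun i => INR i ^ 2) (seq 1 (v - 1))) n.

(* Riemann zeta at a natural argument s (meaningful for s >= 2):
   the sum of the series sum_{n>=1} 1/n^s. *)
Definition zeta (s : nat) : R :=
  epsilon (inhabits 0) (fun l => infinite_sum (fun n => / (INR (n + 1)) ^ s) l).

Definition Gamma_nat (k : nat) : R := INR (fact (k - 1)).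

Definition GF_sum (m v : nat) : R :=
  (PI / (2 * INR m)) ^ (2 * v) *
  sumR (seq 1 (m - 1))
       (fun k => / (cos (INR k * PI / (2 * INR m))) ^ (2 * v)).

(* Main.v *)
Require Import Defs.
From Stdlib Require Import Reals List Arith.
Open Scope R_scope.
From Stdlib Require Import Lia Lra ClassicalEpsilon.
From Coquelicot Require Import Coquelicot.
Import ListNotations.
Open Scope R_scope.

Lemma ex_series_le_R (a b : nat -> R) :
  (forall n, Rabs (a n) <= b n) -> ex_series b -> ex_series a.
Proof. intros H Hb. apply (@ex_series_le R_AbsRing R_CompleteNormedModule a b); auto. Qed.

Lemma is_series_R (a : nat -> R) l : Un_cv (sum_f_R0 a) l -> is_series a l.
Proof. intros H. apply is_series_Reals. exact H. Qed.

Lemma ex_series_inv_sq : ex_series (fun n => / INR (S n) ^ 2).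
Proof.
  apply (ex_series_le_R _ (fun n => 2 * (/ INR (S n) - / INR (S (S n))))).
  - intros n.
    rewrite Rabs_right.
    2:{ apply Rle_ge, Rlt_le, Rinv_0_lt_compat, pow_lt, lt_0_INR; lia. }
    rewrite !S_INR. pose proof (pos_INR n).
    replace (2 * (/ (INR n + 1) - / (INR n + 1 + 1))) with (/ ((INR n + 1) * (INR n + 2) / 2)) by (field; lra).
    apply Rinv_le_contravar.
    + apply Rmult_lt_0_compat; [apply Rmult_lt_0_compat|]; lra.
    + simpl. nra.
  - exists (2 * (/ INR 1 - 0)).
    apply is_series_R.
    assert (E : forall n, sum_f_R0 (fun n => 2 * (/ INR (S n) - / INR (S (S n)))) n
                   = 2 * (/ INR 1 - / INR (S (S n)))).
    { induction n; [reflexivity| rewrite tech5, IHn; ring]. }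
    intros eps Heps.
    destruct (archimed_cor1 (eps/2)) as [N [HN1 HN2]]; [lra|].
    exists N. intros n Hn. unfold R_dist. rewrite E.
    assert (0 < / INR (S (S n)) <= / INR N).
    { split. apply Rinv_0_lt_compat, lt_0_INR; lia.
      apply Rinv_le_contravar. apply lt_0_INR; lia. apply le_INR; lia. }
    rewrite Rabs_left1; lra.
Qed.

Lemma ex_series_inv_pow p : (2 <= p)%nat -> ex_series (fun n => / INR (S n) ^ p).
Proof.
  intros Hp. apply (ex_series_le_R _ (fun n => / INR (S n) ^ 2)) ; [|exact ex_series_inv_sq].
  intros n.
  assert (1 <= INR (S n)) by (rewrite S_INR; pose proof (pos_INR n); lra).
  rewrite Rabs_right.
  2:{ apply Rle_ge, Rlt_le, Rinv_0_lt_compat, pow_lt; lra. }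
  apply Rinv_le_contravar. apply pow_lt; lra.
  apply Rle_pow; auto.
Qed.

Lemma Series_tail_le (a M : nat -> R) :
  (forall n, Rabs (a n) <= M n) -> ex_series M -> Rabs (Series a) <= Series M.
Proof.
  intros H HM.
  assert (HA : ex_series (fun n => Rabs (a n))).
  { apply (ex_series_le_R _ M); auto. intros n; rewrite Rabs_Rabsolu; auto. }
  eapply Rle_trans. apply Series_Rabs; auto.
  apply Series_le; auto. intros n; split; auto. apply Rabs_pos.
Qed.

Lemma Un_cv_Series (a : nat -> R) : ex_series a -> Un_cv (sum_f_R0 a) (Series a).
Proof.
  intros H. apply is_series_Reals. apply Series_correct. auto.
Qed.

Lemma Series_zero : Series (fun _ => 0) = 0.
Proof.
  apply is_series_unique, is_series_R.
  assert (E : forall n, sum_f_R0 (fun _ => 0) n = 0).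
  { induction n; simpl; [reflexivity| rewrite IHn; ring]. }
  intros eps Heps. exists O. intros n _. unfold R_dist. rewrite E, Rminus_diag, Rabs_R0. auto.
Qed.

Lemma Mtest (fn : nat -> R -> R) (M : nat -> R) c (r : posreal) :
  (forall n y, Boule c r y -> Rabs (fn n y) <= M n) -> ex_series M ->
  CVU (fun N y => sum_f_R0 (fun k => fn k y) N) (fun y => Series (fun k => fn k y)) c r.
Proof.
  intros HM HS eps Heps.
  destruct (Un_cv_Series M HS eps Heps) as [N HN].
  exists N. intros n y Hn Hy.
  assert (Ey : ex_series (fun k => fn k y)).
  { apply (ex_series_le_R _ M); auto. }
  rewrite (Series_incr_n (fun k => fn k y) (S n)) by (auto; lia).
  simpl pred.
  replace (sum_f_R0 (fun k : nat => fn k y) n + Series (fun k : nat => fn (S n + k)%nat y) -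
    sum_f_R0 (fun k : nat => fn k y) n) with (Series (fun k : nat => fn (S n + k)%nat y)) by ring.
  eapply Rle_lt_trans.
  apply (Series_tail_le _ (fun k => M (S n + k)%nat)).
  intros k; apply HM; auto.
  apply (ex_series_incr_n M (S n)); auto.
  specialize (HN n Hn). unfold R_dist in HN.
  rewrite (Series_incr_n M (S n)) in HN by (auto; lia). simpl pred in HN.
  assert (0 <= Series (fun k : nat => M (S n + k)%nat)).
  { assert (Hc : Boule c r c) by (unfold Boule; rewrite Rminus_diag, Rabs_R0; apply cond_pos).
    assert (H0 := Series_le (fun _ => 0) (fun k => M (S n + k)%nat)).
    rewrite Series_zero in H0 by auto. apply H0.
    intros k; split; [lra|]. eapply Rle_trans. apply Rabs_pos. apply (HM _ c Hc).
    apply (ex_series_incr_n M (S n)); auto. }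
  rewrite Rabs_left1 in HN; lra.
Qed.

Lemma sum_derive (fn fn' : nat -> R -> R) x :
  (forall n, derivable_pt_lim (fn n) x (fn' n x)) ->
  forall N, derivable_pt_lim (fun y => sum_f_R0 (fun k => fn k y) N) x (sum_f_R0 (fun k => fn' k x) N).
Proof.
  intros H N. induction N.
  - simpl. apply H.
  - simpl. apply (derivable_pt_lim_plus (fun y => sum_f_R0 (fun k => fn k y) N) (fn (S N))); auto.
Qed.

Lemma Series_derive (fn fn' : nat -> R -> R) (M : nat -> R) c (r : posreal) :
  (forall n y, Boule c r y -> derivable_pt_lim (fn n) y (fn' n y)) ->
  (forall n y, Boule c r y -> Rabs (fn' n y) <= M n) -> ex_series M ->
  (forall y, Boule c r y -> ex_series (fun k => fn k y)) ->
  forall x, Boule c r x ->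
  derivable_pt_lim (fun y => Series (fun k => fn k y)) x (Series (fun k => fn' k x)).
Proof.
  intros Hd HM HS Hc.
  apply (CVU_derivable (fun N y => sum_f_R0 (fun k => fn k y) N)
                       (fun N y => sum_f_R0 (fun k => fn' k y) N)
                       (fun y => Series (fun k => fn k y))
                       (fun y => Series (fun k => fn' k y)) c r).
  - apply Mtest with M; auto.
  - intros y Hy. apply Un_cv_Series. auto.
  - intros n y Hy. apply sum_derive. intros k; auto.
Qed.

Lemma PI_gt_3 : 3 < PI.
Proof. pose proof PI2_3_2. lra. Qed.

Lemma deriv_invpow q c y : y + c <> 0 ->
  is_derive (fun y => / (y + c)^(S q)) y (- INR (S q) * / (y+c)^(S (S q))).
Proof.
  intros H. auto_derive.
  - apply Rmult_integral_contrapositive; split; auto. apply pow_nonzero; auto.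
  - assert ((y+c)^q <> 0) by (apply pow_nonzero; auto).
    assert ((y+c)^q <> 0) by (apply pow_nonzero; auto).
    destruct q; simpl; field; try split; auto; apply pow_nonzero; auto.
Qed.

Definition tm (p : nat) (x : R) (n : nat) : R :=
  / (x + INR n * PI) ^ p + / (x - INR (S n) * PI) ^ p.
Definition D (p : nat) (x : R) : R := Series (tm p x).

Lemma inv_pow_bound a y p : 0 < a -> a <= Rabs y -> Rabs (/ y ^ p) <= / a ^ p.
Proof.
  intros Ha Hy. rewrite Rabs_inv, <- RPow_abs.
  apply Rinv_le_contravar. apply pow_lt; auto. apply pow_incr; lra.
Qed.

Lemma tm_bound p x e n : 0 < e <= 1 -> e <= x <= PI - e ->
  Rabs (tm p x n) <= 2 * / e ^ p * / INR (S n) ^ p.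
Proof.
  intros He Hx. pose proof PI_gt_3. pose proof (pos_INR n).
  assert (HS : INR (S n) = INR n + 1) by apply S_INR.
  assert (Hb : / (e * INR (S n)) ^ p = / e ^ p * / INR (S n) ^ p).
  { rewrite Rpow_mult_distr, Rinv_mult. reflexivity. }
  unfold tm. eapply Rle_trans. apply Rabs_triang.
  replace (2 * / e ^ p * / INR (S n) ^ p) with (/ (e * INR (S n)) ^ p + / (e * INR (S n)) ^ p)
    by (rewrite Hb; ring).
  assert (0 < e * INR (S n)) by (rewrite HS; nra).
  apply Rplus_le_compat; apply inv_pow_bound; auto.
  - rewrite Rabs_right; rewrite ?HS; nra.
  - rewrite Rabs_left1; rewrite ?HS; nra.
Qed.

Lemma ex_series_tm_gen p x e : (2 <= p)%nat -> 0 < e <= 1 -> e <= x <= PI - e -> ex_series (tm p x).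
Proof.
  intros Hp He Hx.
  apply (ex_series_le_R _ (fun n => 2 * / e ^ p * / INR (S n) ^ p)).
  intros n; apply tm_bound; auto.
  apply (@ex_series_scal_l R_AbsRing R_NormedModule (2 * / e ^ p) (fun n => / INR (S n) ^ p)).
  apply ex_series_inv_pow; auto.
Qed.

Definition eps_of (x : R) : R := Rmin (Rmin x (PI - x)) 1 / 2.

Lemma eps_of_spec x : 0 < x < PI -> 0 < eps_of x <= 1 /\ 2 * eps_of x <= x <= PI - 2 * eps_of x.
Proof.
  intros H. unfold eps_of.
  pose proof (Rmin_l (Rmin x (PI - x)) 1). pose proof (Rmin_r (Rmin x (PI - x)) 1).
  pose proof (Rmin_l x (PI - x)). pose proof (Rmin_r x (PI - x)).
  assert (0 < Rmin (Rmin x (PI - x)) 1).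
  { apply Rmin_pos; [apply Rmin_pos|]; lra. }
  lra.
Qed.

Lemma ex_series_tm p x : (2 <= p)%nat -> 0 < x < PI -> ex_series (tm p x).
Proof.
  intros Hp Hx. destruct (eps_of_spec x Hx).
  apply ex_series_tm_gen with (eps_of x); auto; lra.
Qed.

Lemma tm_deriv p x n : (1 <= p)%nat -> 0 < x < PI ->
  derivable_pt_lim (fun y => tm p y n) x (- INR p * tm (S p) x n).
Proof.
  intros Hp Hx. destruct p as [|q]; [lia|].
  apply is_derive_Reals. unfold tm.
  pose proof PI_gt_3. pose proof (pos_INR n). rewrite S_INR.
  replace (- INR (S q) * (/ (x + INR n * PI) ^ S (S q) + / (x - (INR n + 1) * PI) ^ S (S q)))
    with (- INR (S q) * / (x + INR n * PI) ^ S (S q) + - INR (S q) * / (x + - ((INR n + 1) * PI)) ^ S (S q))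
    by (unfold Rminus; ring).
  apply (is_derive_plus (fun y => / (y + INR n * PI) ^ S q) (fun y => / (y + - ((INR n + 1) * PI)) ^ S q)).
  - apply deriv_invpow. nra.
  - apply deriv_invpow. nra.
Qed.

Lemma D_deriv p x : (2 <= p)%nat -> 0 < x < PI ->
  derivable_pt_lim (D p) x (- INR p * D (S p) x).
Proof.
  intros Hp Hx. destruct (eps_of_spec x Hx) as [He Hx2].
  set (r := mkposreal (eps_of x) (proj1 He)).
  assert (HB : forall y, Boule x r y -> eps_of x <= y <= PI - eps_of x /\ 0 < y < PI).
  { intros y Hy. unfold Boule in Hy; simpl in Hy. apply Rabs_def2 in Hy. lra. }
  unfold D. rewrite <- Series_scal_l.
  apply (Series_derive (fun n y => tm p y n) (fun n y => - INR p * tm (S p) y n)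
          (fun n => INR p * (2 * / eps_of x ^ (S p) * / INR (S n) ^ (S p))) x r).
  - intros n y Hy. apply tm_deriv; [lia|]. apply HB; auto.
  - intros n y Hy. rewrite Rabs_mult, Rabs_Ropp, Rabs_right by (apply Rle_ge, pos_INR).
    apply Rmult_le_compat_l. apply pos_INR. apply tm_bound; auto. apply HB; auto.
  - apply (@ex_series_scal_l R_AbsRing R_NormedModule (INR p) (fun n => 2 * / eps_of x ^ (S p) * / INR (S n) ^ (S p))).
    apply (@ex_series_scal_l R_AbsRing R_NormedModule (2 * / eps_of x ^ (S p)) (fun n => / INR (S n) ^ (S p))).
    apply ex_series_inv_pow; lia.
  - intros y Hy. apply ex_series_tm; auto. apply HB; auto.
  - unfold Boule. rewrite Rminus_diag, Rabs_R0. simpl. lra.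
Qed.

Lemma block_partial (a : nat -> R) k J :
  sum_f_R0 (fun j => sum_f_R0 (fun r => a (S k * j + r)%nat) k) J = sum_f_R0 a (k + S k * J).
Proof.
  induction J.
  - replace (k + S k * 0)%nat with k by lia. simpl. apply sum_eq. intros i _. f_equal. lia.
  - rewrite tech5, IHJ. rewrite (tech2 a (k + S k * J) (k + S k * S J)) by lia.
    f_equal. replace (k + S k * S J - S (k + S k * J))%nat with k by lia.
    apply sum_eq. intros i _. f_equal. lia.
Qed.

Lemma block_series (a : nat -> R) k l : is_series a l ->
  is_series (fun j => sum_f_R0 (fun r => a (S k * j + r)%nat) k) l.
Proof.
  intros H. apply is_series_Reals in H. apply is_series_Reals.
  apply is_lim_seq_Reals in H. apply is_lim_seq_Reals.
  apply is_lim_seq_ext with (fun J => sum_f_R0 a (k + S k * J)).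
  { intros J. rewrite block_partial. reflexivity. }
  apply (is_lim_seq_subseq (sum_f_R0 a) l (fun J => k + S k * J)%nat); auto.
  apply eventually_subseq. intros n. lia.
Qed.

Lemma Series_pair (a : nat -> R) : ex_series a -> Series a = Series (fun n => a (2*n)%nat + a (S (2*n))).
Proof.
  intros H. symmetry. apply is_series_unique.
  apply (is_series_ext (fun j => sum_f_R0 (fun r => a (S 1 * j + r)%nat) 1)).
  { intros n. simpl. f_equal; f_equal; lia. }
  apply block_series. apply Series_correct; auto.
Qed.

Lemma D2_dup x : 0 < x < PI -> D 2 (x/2) + D 2 ((x + PI)/2) = 4 * D 2 x.
Proof.
  intros Hx. pose proof PI_gt_3.
  unfold D. rewrite <- Series_plus.
  2: apply ex_series_tm; [lia| lra].
  2: apply ex_series_tm; [lia| lra].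
  rewrite (Series_pair (tm 2 x)) by (apply ex_series_tm; [lia|lra]).
  rewrite <- Series_scal_l. apply Series_ext. intros n.
  unfold tm. rewrite !S_INR, !mult_INR. simpl (INR 2).
  pose proof (pos_INR n).
  field; repeat split; nra.
Qed.

Lemma sin_dup x : 0 < x < PI -> / sin x ^ 2 = (/ sin (x/2) ^ 2 + / sin ((x+PI)/2) ^ 2) / 4.
Proof.
  intros Hx.
  replace ((x + PI)/2) with (x/2 + PI/2) by field. rewrite sin_plus, sin_PI2, cos_PI2.
  replace x with (2 * (x/2)) at 1 by field. rewrite sin_2a.
  assert (0 < sin (x/2)) by (apply sin_gt_0; lra).
  assert (0 < cos (x/2)) by (apply cos_gt_0; lra).
  assert (E: sin (x/2) ^2 + cos (x/2) ^2 = 1) by (rewrite <- (sin2_cos2 (x/2)); unfold Rsqr; ring).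
  field_simplify; try lra.
  rewrite <- E at 1. field. lra.
Qed.

Lemma herglotz (h : R -> R) B :
  (forall x, 0 < x < PI -> Rabs (h x) <= B) ->
  (forall x, 0 < x < PI -> h x = (h (x/2) + h ((x+PI)/2)) / 4) ->
  forall x, 0 < x < PI -> h x = 0.
Proof.
  intros HB Hd. pose proof PI_gt_3.
  assert (Hn : forall n x, 0 < x < PI -> Rabs (h x) <= B / 2 ^ n).
  { induction n; intros x Hx.
    - simpl. rewrite Rdiv_1_r. auto.
    - rewrite Hd by auto.
      assert (H1 := IHn (x/2) ltac:(lra)). assert (H2 := IHn ((x+PI)/2) ltac:(lra)).
      unfold Rdiv. rewrite Rabs_mult, (Rabs_right (/ 4)) by lra.
      eapply Rle_trans. apply Rmult_le_compat_r. lra. apply Rabs_triang.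
      simpl. rewrite Rinv_mult. unfold Rdiv in H1, H2.
      replace (B * (/ 2 * / 2 ^ n)) with ((B * / 2 ^ n) / 2) by (field; apply pow_nonzero; lra). lra. }
  assert (Hpow : forall n, INR n <= 2 ^ n).
  { induction n. simpl; lra. rewrite S_INR. simpl. assert (1 <= 2 ^ n) by (apply pow_R1_Rle; lra). lra. }
  intros x Hx.
  assert (B0 : 0 <= B) by (eapply Rle_trans; [apply Rabs_pos| apply (HB x Hx)]).
  destruct (Req_dec (h x) 0) as [E|E]; auto. exfalso.
  assert (Hp : 0 < Rabs (h x)) by (apply Rabs_pos_lt; auto).
  destruct (archimed_cor1 (Rabs (h x) / (B + 1))) as [N [HN1 HN2]].
  { apply Rdiv_lt_0_compat; lra. }
  assert (HNpos : 0 < INR N) by (apply lt_0_INR; auto).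
  specialize (Hn N x Hx).
  assert (B / 2 ^ N <= B / INR N).
  { unfold Rdiv. apply Rmult_le_compat_l; auto. apply Rinv_le_contravar; auto. }
  assert (B / INR N < Rabs (h x)).
  { apply (Rmult_lt_compat_r (B+1)) in HN1; [|lra].
    unfold Rdiv in *. replace (Rabs (h x) * / (B + 1) * (B + 1)) with (Rabs (h x)) in HN1 by (field; lra).
    nra. }
  lra.
Qed.

Lemma inv_sq_le1 y : 1 <= Rabs y -> 0 <= / y ^ 2 <= 1.
Proof.
  intros H. assert (y <> 0) by (intro E; subst; rewrite Rabs_R0 in H; lra).
  split. apply Rlt_le, Rinv_0_lt_compat. apply pow2_gt_0; auto.
  pose proof (inv_pow_bound 1 y 2 ltac:(lra) H). rewrite Rabs_right in H1.
  rewrite pow1, Rinv_1 in H1. lra. apply Rle_ge, Rlt_le, Rinv_0_lt_compat, pow2_gt_0; auto.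
Qed.

Lemma f_bound x : 0 < x <= PI / 2 -> 0 <= / sin x ^ 2 - / x ^ 2 <= 3.
Proof.
  intros Hx. pose proof PI_4.
  assert (Hs : x - x^3/6 <= sin x).
  { pose proof (sin_bound x 0 ltac:(lra) ltac:(lra)) as [H1 _].
    unfold sin_approx, sin_term in H1. simpl in H1. lra. }
  assert (Hs2 : sin x < x) by (apply sin_lt_x; lra).
  assert (HL : x - x^3/6 = x * (1 - x^2/6)) by field.
  remember (x^2/6) as t eqn:Et.
  assert (Ht : 0 < t <= 2/3) by (rewrite Et; nra).
  assert (HLp : 0 < x * (1 - t)) by nra.
  split.
  - assert (/ x ^ 2 <= / sin x ^ 2).
    { apply Rinv_le_contravar. apply pow2_gt_0. nra. apply pow_incr; nra. }
    lra.
  - assert (/ sin x ^ 2 <= / (x * (1 - t)) ^ 2).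
    { apply Rinv_le_contravar. apply pow2_gt_0. lra. apply pow_incr; nra. }
    assert (E : / (x * (1 - t)) ^ 2 - / x ^ 2 = (2 - t) / (6 * (1 - t) ^ 2)).
    { rewrite Et. field. split; [|lra]. intro. nra. }
    assert ((2 - t) / (6 * (1 - t) ^ 2) <= 3).
    { apply Rle_div_l. nra. nra. }
    lra.
Qed.

Lemma tm0 x : tm 2 x 0 = / x ^ 2 + / (x - PI) ^ 2.
Proof. unfold tm. simpl INR. f_equal; f_equal; f_equal; ring. Qed.

Lemma tmS_bound x n : 0 < x < PI -> Rabs (tm 2 x (S n)) <= 2 * / PI ^ 2 * / INR (S n) ^ 2.
Proof.
  intros Hx. pose proof PI_gt_3. pose proof (pos_INR n).
  assert (HS : INR (S n) = INR n + 1) by apply S_INR.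
  assert (HS2 : INR (S (S n)) = INR n + 2) by (rewrite !S_INR; ring).
  replace (2 * / PI ^ 2 * / INR (S n) ^ 2) with (/ (PI * INR (S n)) ^ 2 + / (PI * INR (S n)) ^ 2)
    by (rewrite Rpow_mult_distr, Rinv_mult; ring).
  unfold tm. eapply Rle_trans. apply Rabs_triang.
  assert (0 < PI * INR (S n)) by (rewrite HS; nra).
  apply Rplus_le_compat; apply inv_pow_bound; auto.
  - rewrite Rabs_right; rewrite ?HS, ?HS2; nra.
  - rewrite Rabs_left1; rewrite ?HS, ?HS2; nra.
Qed.

Definition C0 : R := Series (fun n => 2 * / PI ^ 2 * / INR (S n) ^ 2).

Lemma h_bound x : 0 < x < PI -> Rabs (/ sin x ^ 2 - D 2 x) <= 3 + C0.
Proof.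
  intros Hx. pose proof PI_gt_3.
  unfold D. rewrite Series_incr_1 by (apply ex_series_tm; auto).
  rewrite tm0.
  assert (HR : Rabs (Series (fun k => tm 2 x (S k))) <= C0).
  { apply Series_tail_le. intros n. apply tmS_bound; auto.
    apply (@ex_series_scal_l R_AbsRing R_NormedModule (2 * / PI ^ 2) (fun n => / INR (S n) ^ 2)).
    apply ex_series_inv_sq. }
  assert (Hg : -1 <= / sin x ^ 2 - / x ^ 2 - / (x - PI) ^ 2 <= 3).
  { destruct (Rle_or_lt x (PI/2)).
    - pose proof (f_bound x ltac:(lra)).
      pose proof (inv_sq_le1 (x - PI) ltac:(rewrite Rabs_left1; lra)). lra.
    - pose proof (f_bound (PI - x) ltac:(lra)).
      rewrite sin_PI_x in H1. replace ((PI - x)^2) with ((x - PI)^2) in H1 by ring.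
      pose proof (inv_sq_le1 x ltac:(rewrite Rabs_right; lra)). lra. }
  set (s := Series (fun k => tm 2 x (S k))) in *.
  pose proof (Rle_abs s). pose proof (Rle_abs (- s)). rewrite Rabs_Ropp in *.
  apply Rabs_le. lra.
Qed.

Lemma D2_csc x : 0 < x < PI -> D 2 x = / sin x ^ 2.
Proof.
  intros Hx.
  assert (H := herglotz (fun y => / sin y ^ 2 - D 2 y) (3 + C0) h_bound).
  assert (H' : / sin x ^ 2 - D 2 x = 0).
  { apply H; auto. intros y Hy. rewrite sin_dup by auto.
    pose proof (D2_dup y Hy). lra. }
  lra.
Qed.

Lemma sumR_app l1 l2 f : sumR (l1 ++ l2) f = sumR l1 f + sumR l2 f.
Proof. induction l1; simpl; [ring| rewrite IHl1; ring]. Qed.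

Lemma sumR_seq_S a k f : sumR (seq a (S k)) f = sumR (seq a k) f + f (a + k)%nat.
Proof. rewrite seq_S, sumR_app. simpl. ring. Qed.

Lemma sumR_map l g f : sumR (map g l) f = sumR l (fun n => f (g n)).
Proof. induction l; simpl; [ring| rewrite IHl; ring]. Qed.

Lemma sumR_shift a k f : sumR (seq (S a) k) f = sumR (seq a k) (fun n => f (S n)).
Proof. rewrite <- seq_shift, sumR_map. reflexivity. Qed.

Lemma sumR_ext_in l f g : (forall n, In n l -> f n = g n) -> sumR l f = sumR l g.
Proof.
  induction l; intros H; simpl; auto.
  rewrite H by (left; auto). rewrite IHl; auto. intros n Hn; apply H; right; auto.
Qed.

Lemma sumR_plus l f g : sumR l (fun n => f n + g n) = sumR l f + sumR l g.
Proof. induction l; simpl; [ring| rewrite IHl; ring]. Qed.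

Lemma sumR_scal l c f : sumR l (fun n => c * f n) = c * sumR l f.
Proof. induction l; simpl; [ring| rewrite IHl; ring]. Qed.

Lemma sumR_zero l f : (forall n, In n l -> f n = 0) -> sumR l f = 0.
Proof. intros H. rewrite (sumR_ext_in l f (fun _ => 0)) by auto. clear H. induction l; simpl; [reflexivity| rewrite IHl; ring]. Qed.

Lemma sumR_seq0_S k f : sumR (seq 0 (S k)) f = f O + sumR (seq 0 k) (fun n => f (S n)).
Proof. simpl. rewrite sumR_shift. reflexivity. Qed.

Lemma esym_0 l : esym l 0 = 1.
Proof. destruct l; reflexivity. Qed.

Lemma esym_big l n : (length l < n)%nat -> esym l n = 0.
Proof.
  revert n. induction l; intros n H; destruct n; simpl in *; try lia; auto.
  rewrite !IHl by lia. ring.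
Qed.

Lemma esym_snoc l x n : esym (l ++ [x]) (S n) = esym l (S n) + x * esym l n.
Proof.
  revert n. induction l as [|y l IH]; intros n.
  - simpl. destruct n; reflexivity.
  - simpl. rewrite IH. destruct n.
    + rewrite !esym_0. ring.
    + rewrite IH. ring.
Qed.

Lemma s_coef_0 v : s_coef v 0 = 1.
Proof. apply esym_0. Qed.

Lemma s_coef_big v : (1 <= v)%nat -> s_coef v v = 0.
Proof. intros H. unfold s_coef. apply esym_big. rewrite length_map, length_seq. lia. Qed.

Lemma s_coef_S v n : (1 <= v)%nat -> s_coef (S v) (S n) = s_coef v (S n) + INR v ^ 2 * s_coef v n.
Proof.
  intros H. unfold s_coef. replace (S v - 1)%nat with (S (v - 1)) by lia.
  rewrite seq_S, map_app. replace (1 + (v - 1))%nat with v by lia.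
  apply esym_snoc.
Qed.

Definition cf (v n : nat) : R :=
  4 ^ n * s_coef v n * INR (fact (2*v - 2*n - 1)) / INR (fact (2*v - 1)).

Lemma INR_fact_S m : INR (fact (S m)) = INR (S m) * INR (fact m).
Proof. rewrite <- mult_INR. reflexivity. Qed.

Lemma INR_S_neq m : INR (S m) <> 0.
Proof. apply not_0_INR. lia. Qed.

Lemma coef_step v (d : nat -> R) : (1 <= v)%nat ->
  (sumR (seq 0 v) (fun n => cf v n * (INR (2*v-2*n) * INR (S (2*v-2*n))) * d (S (S (2*v-2*n))))
   + 4 * INR v ^ 2 * sumR (seq 0 v) (fun n => cf v n * d (2*v-2*n)%nat)) / (INR (2*v) * INR (S (2*v)))
  = sumR (seq 0 (S v)) (fun n => cf (S v) n * d (2 * S v - 2*n)%nat).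
Proof.
  intros Hv.
  set (P := fun n => 4^n * s_coef v n * INR (fact (2*v+1-2*n)) / INR (fact (2*v+1)) * d (2*S v - 2*n)%nat).
  set (Q := fun n => 4^(S n) * INR v^2 * s_coef v n * INR (fact (2*v-2*n-1)) / INR (fact (2*v+1)) * d (2*v-2*n)%nat).
  destruct v as [|K']; [lia|].
  set (K := (2 * S K' - 1)%nat).
  assert (HK1 : (2 * S K' = S K)%nat) by (unfold K; lia).
  assert (HK2 : (2 * S K' + 1 = S (S K))%nat) by (unfold K; lia).
  assert (HvK : INR (S K) = 2 * INR (S K')) by (rewrite <- HK1, mult_INR; reflexivity).
  transitivity (sumR (seq 0 (S K')) P + sumR (seq 0 (S K')) Q).
  - unfold Rdiv at 1. rewrite Rmult_plus_distr_r. f_equal.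
    + rewrite Rmult_comm, <- sumR_scal. apply sumR_ext_in. intros n Hn. apply in_seq in Hn.
      unfold P, cf. set (k := (2 * S K' - 2 * n - 1)%nat).
      assert (Hk1 : (2 * S K' - 2 * n = S k)%nat) by (unfold k; lia).
      assert (Hk2 : (2 * S K' + 1 - 2 * n = S (S k))%nat) by (unfold k; lia).
      assert (Hk3 : (S (S (2 * S K' - 2 * n)) = 2 * S (S K') - 2 * n)%nat) by lia.
      rewrite Hk3, Hk1, Hk2, HK2. fold K. rewrite HK1.
      rewrite !INR_fact_S.
      pose proof (INR_S_neq K). pose proof (INR_S_neq (S K)). pose proof (INR_S_neq k). pose proof (INR_S_neq (S k)).
      pose proof (INR_fact_neq_0 k). pose proof (INR_fact_neq_0 K).
      field. repeat split; auto.
    + transitivity (sumR (seq 0 (S K')) (fun n => (4 * INR (S K') ^ 2 * / (INR (2 * S K') * INR (S (2*S K')))) * (cf (S K') n * d (2*S K' - 2*n)%nat))).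
      { rewrite sumR_scal. ring. }
      apply sumR_ext_in. intros n Hn. apply in_seq in Hn.
      unfold Q, cf. rewrite HK2. fold K. rewrite HK1, !INR_fact_S.
      pose proof (INR_S_neq K). pose proof (INR_S_neq (S K)). pose proof (INR_fact_neq_0 K).
      pose proof (INR_fact_neq_0 (2 * S K' - 2 * n - 1)).
      rewrite HvK. simpl pow.
      field. repeat split; auto. rewrite HvK in *. lra.
  - rewrite (sumR_seq0_S (S K') (fun n => cf (S (S K')) n * d (2 * S (S K') - 2 * n)%nat)). cbv beta.
    rewrite (sumR_ext_in (seq 0 (S K')) (fun n => cf (S (S K')) (S n) * d (2 * S (S K') - 2 * S n)%nat) (fun n => P (S n) + Q n)).
    2:{ intros n Hn. apply in_seq in Hn. unfold P, Q, cf. cbv beta.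
        rewrite (s_coef_S (S K') n) by lia.
        replace (2 * S (S K') - 2 * S n - 1)%nat with (2 * S K' - 2 * n - 1)%nat by lia.
        replace (2 * S (S K') - 2 * S n)%nat with (2 * S K' - 2 * n)%nat by lia.
        replace (2 * S K' + 1 - 2 * S n)%nat with (2 * S K' - 2 * n - 1)%nat by lia.
        replace (2 * S (S K') - 1)%nat with (2 * S K' + 1)%nat by lia.
        pose proof (INR_fact_neq_0 (2 * S K' + 1)). field. auto. }
    rewrite sumR_plus.
    assert (HP : sumR (seq 0 (S K')) P = P 0%nat + sumR (seq 0 (S K')) (fun n => P (S n))).
    { rewrite sumR_seq0_S. rewrite (sumR_seq_S 0 K' (fun n => P (S n))).
      assert (P (S (0 + K')) = 0).
      { unfold P. cbv beta. simpl (0 + K')%nat. rewrite s_coef_big by lia. rewrite Rmult_0_r. unfold Rdiv. rewrite !Rmult_0_l. reflexivity. }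
      lra. }
    rewrite HP.
    assert (P 0%nat = cf (S (S K')) 0 * d (2 * S (S K') - 2 * 0)%nat).
    { unfold P, cf. cbv beta. rewrite !s_coef_0. replace (2 * S (S K') - 2 * 0 - 1)%nat with (2 * S K' + 1)%nat by lia.
      replace (2 * S K' + 1 - 2 * 0)%nat with (2 * S K' + 1)%nat by lia.
      replace (2 * S (S K') - 1)%nat with (2 * S K' + 1)%nat by lia.
      pose proof (INR_fact_neq_0 (2 * S K' + 1)). field. auto. }
    lra.
Qed.

Lemma dcsc k y : sin y <> 0 ->
  is_derive (fun y => / sin y ^ (S k)) y (- INR (S k) * cos y / sin y ^ (S (S k))).
Proof.
  intros H. assert (sin y ^ k <> 0) by (apply pow_nonzero; auto).
  auto_derive.
  - apply Rmult_integral_contrapositive; split; auto.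
  - destruct k; simpl; field; repeat split; auto; apply pow_nonzero; auto.
Qed.

Lemma dcsc2 k y : sin y <> 0 ->
  is_derive (fun y => - INR (S k) * cos y / sin y ^ (S (S k))) y
    (INR (S k) * (sin y * sin y + INR (S (S k)) * (cos y * cos y)) / sin y ^ (S (S (S k)))).
Proof.
  intros H. assert (sin y ^ k <> 0) by (apply pow_nonzero; auto).
  auto_derive.
  - repeat (apply Rmult_integral_contrapositive; split); auto.
  - rewrite !S_INR. destruct k; simpl; field; repeat split; auto; apply pow_nonzero; auto.
Qed.

Lemma sumR_derive (l : list nat) (f : nat -> R -> R) (f' : nat -> R) x :
  (forall n, In n l -> is_derive (f n) x (f' n)) ->
  is_derive (fun y => sumR l (fun n => f n y)) x (sumR l f').
Proof.
  induction l; intros H; simpl.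
  - apply (is_derive_const 0 x).
  - apply (is_derive_plus (f a) (fun y => sumR l (fun n => f n y))).
    apply H; left; auto. apply IHl. intros n Hn; apply H; right; auto.
Qed.

Lemma locally_I x : 0 < x < PI -> locally x (fun t => 0 < t < PI).
Proof.
  intros Hx. apply (locally_interval _ x (Finite 0) (Finite PI)); simpl; try lra.
  intros y H1 H2. lra.
Qed.

Lemma is_derive_D p x : (2 <= p)%nat -> 0 < x < PI -> is_derive (D p) x (- INR p * D (S p) x).
Proof. intros. apply is_derive_Reals. apply D_deriv; auto. Qed.

Definition G (v : nat) (x : R) : R := sumR (seq 0 v) (fun n => cf v n * D (2*v - 2*n) x).

Lemma csc_G v : (1 <= v)%nat -> forall x, 0 < x < PI -> / sin x ^ (2*v) = G v x.
Proof.
  induction v as [|v IH]; intros Hv; [lia|].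
  destruct (Nat.eq_dec v 0) as [->|Hv0].
  { intros x Hx. unfold G, cf. simpl. rewrite (D2_csc x Hx). rewrite s_coef_0. simpl. field.
    apply Rgt_not_eq, sin_gt_0; lra. }
  assert (Hv1 : (1 <= v)%nat) by lia. specialize (IH Hv1).
  set (k := (2 * v - 1)%nat).
  assert (Hk : (2 * v = S k)%nat) by (unfold k; lia).
  set (G1 := fun y => sumR (seq 0 v) (fun n => cf v n * (- INR (2*v-2*n) * D (S (2*v-2*n)) y))).
  set (G2 := fun y => sumR (seq 0 v) (fun n => cf v n * (- INR (2*v-2*n) * (- INR (S (2*v-2*n)) * D (S (S (2*v-2*n))) y)))).
  assert (HG1 : forall y, 0 < y < PI -> is_derive (G v) y (G1 y)).
  { intros y Hy. unfold G, G1.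
    apply (sumR_derive (seq 0 v) (fun n y => cf v n * D (2*v-2*n) y)).
    intros n Hn. apply in_seq in Hn. apply is_derive_scal. apply is_derive_D; auto. lia. }
  assert (HG2 : forall y, 0 < y < PI -> is_derive G1 y (G2 y)).
  { intros y Hy. unfold G1, G2.
    apply (sumR_derive (seq 0 v) (fun n y => cf v n * (- INR (2*v-2*n) * D (S (2*v-2*n)) y))).
    intros n Hn. apply in_seq in Hn. apply is_derive_scal. apply is_derive_scal. apply is_derive_D; auto. lia. }
  set (F1 := fun y => - INR (S k) * cos y / sin y ^ (S (S k))).
  assert (Hsin : forall y, 0 < y < PI -> sin y <> 0) by (intros y Hy; apply Rgt_not_eq, sin_gt_0; lra).
  assert (HF1 : forall y, 0 < y < PI -> F1 y = G1 y).
  { intros y Hy.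
    assert (A1 : is_derive (fun y => / sin y ^ (2 * v)) y (G1 y)).
    { apply (is_derive_ext_loc (G v)).
      - apply (filter_imp (fun t => 0 < t < PI)). intros t Ht. symmetry. apply IH; auto. apply locally_I; auto.
      - apply HG1; auto. }
    assert (A2 : is_derive (fun y => / sin y ^ (2 * v)) y (F1 y)).
    { rewrite Hk. apply dcsc; auto. }
    apply is_derive_unique in A1. apply is_derive_unique in A2. congruence. }
  intros x Hx.
  assert (A3 : is_derive G1 x (INR (S k) * (sin x * sin x + INR (S (S k)) * (cos x * cos x)) / sin x ^ (S (S (S k))))).
  { apply (is_derive_ext_loc F1).
    - apply (filter_imp (fun t => 0 < t < PI)). intros t Ht. apply HF1; auto. apply locally_I; auto.
    - apply dcsc2; auto. }
  apply is_derive_unique in A3. rewrite (is_derive_unique _ _ _ (HG2 x Hx)) in A3.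
  assert (Hc : cos x * cos x = 1 - sin x * sin x) by (pose proof (sin2_cos2 x); unfold Rsqr in *; lra).
  rewrite Hc in A3.
  assert (Ecsc : / sin x ^ (2 * S v) = (G2 x + 4 * INR v ^ 2 * / sin x ^ (2 * v)) / (INR (2 * v) * INR (S (2 * v)))).
  { rewrite A3. rewrite Hk. replace (2 * S v)%nat with (S (S (S k))) by lia.
    assert (INR (S k) = 2 * INR v) by (rewrite <- Hk, mult_INR; reflexivity).
    pose proof (Hsin x Hx). assert (sin x ^ k <> 0) by (apply pow_nonzero; auto).
    rewrite !S_INR in *. simpl. replace (INR v) with ((INR k + 1) / 2) by lra. clearbody k. pose proof (pos_INR k). field. repeat split; auto; try lra. }
  rewrite Ecsc, (IH x Hx).
  unfold G2, G. rewrite <- (coef_step v (fun j => D j x) Hv1). cbv beta.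
  f_equal. f_equal. apply sumR_ext_in. intros n _. ring.
Qed.

Lemma zeta_is p : (2 <= p)%nat -> is_series (fun n => / INR (S n) ^ p) (zeta p).
Proof.
  intros Hp. destruct (ex_series_inv_pow p Hp) as [l Hl].
  unfold zeta.
  assert (Hi : exists l, infinite_sum (fun n => / INR (n + 1) ^ p) l).
  { exists l. apply is_series_Reals. apply (is_series_ext (fun n => / INR (S n) ^ p)); auto.
    intros n. rewrite Nat.add_1_r. reflexivity. }
  pose proof (epsilon_spec (inhabits 0) _ Hi) as H.
  apply is_series_Reals in H.
  apply (is_series_ext (fun n => / INR (n + 1) ^ p)); auto.
  intros n. rewrite Nat.add_1_r. reflexivity.
Qed.

Lemma is_series_nil : is_series (fun _ : nat => 0) 0.
Proof.
  apply is_series_R.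
  assert (E : forall n, sum_f_R0 (fun _ => 0) n = 0).
  { induction n; simpl; [reflexivity| rewrite IHn; ring]. }
  intros eps Heps. exists O. intros n _. unfold R_dist. rewrite E, Rminus_diag, Rabs_R0. auto.
Qed.

Lemma is_series_sumR (l : list nat) (a : nat -> nat -> R) (L : nat -> R) :
  (forall k, In k l -> is_series (a k) (L k)) ->
  is_series (fun j => sumR l (fun k => a k j)) (sumR l L).
Proof.
  induction l; intros H; simpl.
  - apply is_series_nil.
  - apply (@is_series_plus R_AbsRing R_NormedModule (a a0) (fun j => sumR l (fun k => a k j))).
    apply H; left; auto. apply IHl. intros k Hk; apply H; right; auto.
Qed.

Lemma sum_f_R0_sumR f N : sum_f_R0 f N = sumR (seq 0 (S N)) f.
Proof. induction N. simpl. ring. rewrite tech5, sumR_seq_S, IHN. reflexivity. Qed.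

Lemma sumR_shift_gen b a N f : sumR (seq (b + a) N) f = sumR (seq a N) (fun k => f (b + k)%nat).
Proof.
  revert a. induction N; intros a; simpl; auto.
  f_equal. specialize (IHN (S a)). rewrite <- IHN. f_equal. f_equal. lia.
Qed.

Lemma sumR_rev l f : sumR (rev l) f = sumR l f.
Proof. induction l; simpl; auto. rewrite sumR_app, IHl. simpl. ring. Qed.

Lemma rev_seq1 N : rev (seq 1 N) = map (fun k => S N - k)%nat (seq 1 N).
Proof.
  induction N; auto.
  transitivity (S N :: map (fun k => S N - k)%nat (seq 1 N)).
  - rewrite seq_S, rev_app_distr, IHN. reflexivity.
  - change (seq 1 (S N)) with (1%nat :: seq 2 N). rewrite <- (seq_shift N 1), map_cons, map_map.
    f_equal.
Qed.

Lemma sumR_refl N f : sumR (seq 1 N) f = sumR (seq 1 N) (fun k => f (S N - k)%nat).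
Proof. rewrite <- sumR_rev, rev_seq1, sumR_map. reflexivity. Qed.

Lemma sumR_swap l1 l2 (f : nat -> nat -> R) :
  sumR l1 (fun a => sumR l2 (fun b => f a b)) = sumR l2 (fun b => sumR l1 (fun a => f a b)).
Proof.
  induction l1; simpl.
  - induction l2; simpl; auto. rewrite <- IHl2. ring.
  - rewrite IHl1. rewrite <- sumR_plus. reflexivity.
Qed.

Lemma pow_scale c y A q : c <> 0 -> A <> 0 -> y ^ 2 = (c * A) ^ 2 ->
  c ^ (2 * q) * / y ^ (2 * q) = / A ^ (2 * q).
Proof.
  intros Hc HA Hy. rewrite !pow_mult, Hy, Rpow_mult_distr, Rpow_mult_distr.
  assert ((c^2)^q <> 0) by (apply pow_nonzero, pow_nonzero; auto).
  assert ((A^2)^q <> 0) by (apply pow_nonzero, pow_nonzero; auto).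
  field. auto.
Qed.

Lemma scale_tm q m k j : (1 <= m)%nat -> (1 <= k < m)%nat ->
  (PI / (2 * INR m)) ^ (2 * q) * tm (2 * q) (INR k * PI / (2 * INR m)) j
  = / INR (2 * m * j + k) ^ (2 * q) + / INR (2 * m * S j - k) ^ (2 * q).
Proof.
  intros Hm Hk. pose proof PI_gt_3.
  assert (HM : 0 < INR m) by (apply lt_0_INR; lia).
  assert (Hc : PI / (2 * INR m) <> 0) by (apply Rgt_not_eq; apply Rdiv_lt_0_compat; lra).
  unfold tm. rewrite Rmult_plus_distr_l. f_equal.
  - apply pow_scale; auto. apply not_0_INR. lia.
    rewrite plus_INR, !mult_INR. simpl (INR 2). field. lra.
  - apply pow_scale; auto. apply not_0_INR. lia.
    rewrite minus_INR by nia. rewrite !mult_INR, S_INR. simpl (INR 2). field. lra.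
Qed.

Lemma D_is_series q m k : (1 <= q)%nat -> (1 <= k < m)%nat ->
  is_series (fun j => / INR (2 * m * j + k) ^ (2 * q) + / INR (2 * m * S j - k) ^ (2 * q))
    ((PI / (2 * INR m)) ^ (2 * q) * D (2 * q) (INR k * PI / (2 * INR m))).
Proof.
  intros Hq Hk. pose proof PI_gt_3.
  assert (HM : 0 < INR m) by (apply lt_0_INR; lia).
  assert (Hx : 0 < INR k * PI / (2 * INR m) < PI).
  { assert (1 <= INR k) by (apply (le_INR 1); lia).
    assert (INR k < INR m) by (apply lt_INR; lia).
    split. apply Rdiv_lt_0_compat; nra.
    apply (Rmult_lt_reg_r (2 * INR m)); [lra|]. unfold Rdiv. rewrite Rmult_assoc, Rinv_l by lra. nra. }
  apply (is_series_ext (fun j => (PI / (2 * INR m)) ^ (2 * q) * tm (2 * q) (INR k * PI / (2 * INR m)) j)).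
  { intros j. apply scale_tm; lia. }
  apply (@is_series_scal_l R_AbsRing R_NormedModule).
  apply Series_correct. apply ex_series_tm; auto. lia.
Qed.

Lemma block_identity m p j : (1 <= m)%nat ->
  sum_f_R0 (fun r => / INR (S (S (2 * m - 1) * j + r)) ^ p) (2 * m - 1)
  = sumR (seq 1 (m - 1)) (fun k => / INR (2 * m * j + k) ^ p + / INR (2 * m * S j - k) ^ p)
    + (/ INR (2 * m * j + m) ^ p + / INR (2 * m * j + 2 * m) ^ p).
Proof.
  intros Hm.
  set (g := fun r => / INR (2 * m * j + r) ^ p).
  rewrite sum_f_R0_sumR. replace (S (2 * m - 1)) with (2 * m)%nat by lia.
  transitivity (sumR (seq 1 (2 * m)) g).
  { rewrite sumR_shift. apply sumR_ext_in. intros r _. unfold g. f_equal. f_equal. f_equal. lia. }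
  replace (2 * m)%nat with ((m - 1) + (1 + ((m - 1) + 1)))%nat at 1 by lia.
  rewrite !seq_app, !sumR_app.
  replace (1 + (m - 1))%nat with m by lia.
  replace (m + 1)%nat with (m + 1)%nat by lia.
  rewrite (sumR_shift_gen m 1 (m - 1)).
  rewrite (sumR_refl (m - 1) (fun k => g (m + k)%nat)).
  replace (S (m - 1)) with m by lia.
  rewrite sumR_plus.
  replace (m + 1 + (m - 1))%nat with (2 * m)%nat by lia.
  cbn [sumR seq].
  assert (E : sumR (seq 1 (m - 1)) (fun k => g (m + (m - k))%nat) =
              sumR (seq 1 (m - 1)) (fun k => / INR (2 * m * S j - k) ^ p)).
  { apply sumR_ext_in. intros k Hk. apply in_seq in Hk. unfold g. f_equal. f_equal. f_equal. nia. }
  rewrite E. unfold g. ring.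
Qed.

Lemma key q m : (1 <= q)%nat -> (1 <= m)%nat ->
  (PI / (2 * INR m)) ^ (2 * q) * sumR (seq 1 (m - 1)) (fun k => D (2 * q) (INR k * PI / (2 * INR m)))
  = zeta (2 * q) * (1 - / INR m ^ (2 * q)).
Proof.
  intros Hq Hm.
  assert (Hp : (2 <= 2 * q)%nat) by lia.
  assert (HA : is_series (fun j => sumR (seq 1 (m - 1)) (fun k => / INR (2 * m * j + k) ^ (2 * q) + / INR (2 * m * S j - k) ^ (2 * q)))
     (sumR (seq 1 (m - 1)) (fun k => (PI / (2 * INR m)) ^ (2 * q) * D (2 * q) (INR k * PI / (2 * INR m))))).
  { apply (is_series_sumR _ (fun k j => / INR (2 * m * j + k) ^ (2 * q) + / INR (2 * m * S j - k) ^ (2 * q))).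
    intros k Hk. apply in_seq in Hk. apply D_is_series; lia. }
  assert (HB := block_series _ (2 * m - 1) _ (zeta_is (2 * q) Hp)).
  assert (HB' : is_series (fun j => sumR (seq 1 (m - 1)) (fun k => / INR (2 * m * j + k) ^ (2 * q) + / INR (2 * m * S j - k) ^ (2 * q))
                   + (/ INR (2 * m * j + m) ^ (2 * q) + / INR (2 * m * j + 2 * m) ^ (2 * q))) (zeta (2 * q))).
  { eapply is_series_ext; [|exact HB]. intros j. cbv beta. apply block_identity; auto. }
  assert (HE0 : is_series (fun i => / INR (m * S i) ^ (2 * q)) (/ INR m ^ (2 * q) * zeta (2 * q))).
  { eapply is_series_ext; [| apply (@is_series_scal_l R_AbsRing R_NormedModule (/ INR m ^ (2 * q))); exact (zeta_is (2 * q) Hp)].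
    intros n. cbv beta. change (scal (/ INR m ^ (2 * q)) (/ INR (S n) ^ (2 * q))) with (/ INR m ^ (2 * q) * / INR (S n) ^ (2 * q)).
    rewrite mult_INR, Rpow_mult_distr, Rinv_mult. reflexivity. }
  assert (HE : is_series (fun j => / INR (2 * m * j + m) ^ (2 * q) + / INR (2 * m * j + 2 * m) ^ (2 * q)) (/ INR m ^ (2 * q) * zeta (2 * q))).
  { eapply is_series_ext; [| exact (block_series _ 1 _ HE0)]. intros j. simpl sum_f_R0.
    cbv beta. simpl sum_f_R0. f_equal; do 3 f_equal; lia. }
  assert (HC := @is_series_minus R_AbsRing R_NormedModule _ _ _ _ HB' HE).
  assert (HC' : is_series (fun j => sumR (seq 1 (m - 1)) (fun k => / INR (2 * m * j + k) ^ (2 * q) + / INR (2 * m * S j - k) ^ (2 * q)))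
      (zeta (2 * q) - / INR m ^ (2 * q) * zeta (2 * q))).
  { eapply is_series_ext; [| exact HC]. intros j. cbv beta. change (plus ?a (opp ?b)) with (Rplus a (Ropp b)). change (@eq _ ?x ?y) with (@eq R x y). ring. }
  apply is_series_unique in HA. apply is_series_unique in HC'.
  rewrite <- sumR_scal. rewrite <- HA, HC'. ring.
Qed.

Theorem mainTheorem3 (m v : nat) (hm : (1 <= m)%nat) (hv : (1 <= v)%nat) :
  GF_sum m v =
  / INR (fact (2 * v - 1)) *
  sumR (seq 0 v)
    (fun n => (PI / INR m) ^ (2 * n) * s_coef v n *
              Gamma_nat (2 * v - 2 * n) * zeta (2 * v - 2 * n) *
              (1 - / (INR m) ^ (2 * v - 2 * n))).
Proof.
  pose proof PI_gt_3.
  assert (HM : 0 < INR m) by (apply lt_0_INR; lia).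
  assert (Hxk : forall k, In k (seq 1 (m - 1)) -> 0 < INR k * PI / (2 * INR m) < PI).
  { intros k Hk. apply in_seq in Hk.
    assert (1 <= INR k) by (apply (le_INR 1); lia).
    assert (INR k < INR m) by (apply lt_INR; lia).
    split. apply Rdiv_lt_0_compat; nra.
    apply (Rmult_lt_reg_r (2 * INR m)); [lra|]. unfold Rdiv. rewrite Rmult_assoc, Rinv_l by lra. nra. }
  unfold GF_sum.
  assert (S1 : sumR (seq 1 (m - 1)) (fun k => / cos (INR k * PI / (2 * INR m)) ^ (2 * v))
             = sumR (seq 1 (m - 1)) (fun k => G v (INR k * PI / (2 * INR m)))).
  { rewrite sumR_refl. apply sumR_ext_in. intros k Hk.
    rewrite <- csc_G by auto. assert (Hk' := Hk). apply in_seq in Hk'.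
    replace (S (m - 1)) with m by lia. rewrite minus_INR by lia.
    replace ((INR m - INR k) * PI / (2 * INR m)) with (PI / 2 - INR k * PI / (2 * INR m)) by (field; lra).
    rewrite cos_shift. reflexivity. }
  rewrite S1. unfold G.
  rewrite (sumR_swap (seq 1 (m - 1)) (seq 0 v) (fun k n => cf v n * D (2 * v - 2 * n) (INR k * PI / (2 * INR m)))).
  rewrite <- !sumR_scal. apply sumR_ext_in. intros n Hn. apply in_seq in Hn.
  rewrite sumR_scal.
  set (q := (v - n)%nat).
  assert (Hq : (2 * v - 2 * n = 2 * q)%nat) by (unfold q; lia).
  assert (Hvq : (v = n + q)%nat) by (unfold q; lia). clearbody q.
  rewrite Hq.
  assert (Hpow : (PI / (2 * INR m)) ^ (2 * v) = (PI / (2 * INR m)) ^ (2 * n) * (PI / (2 * INR m)) ^ (2 * q)).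
  { rewrite <- pow_add. f_equal. lia. }
  assert (Hpow2 : (PI / INR m) ^ (2 * n) = 4 ^ n * (PI / (2 * INR m)) ^ (2 * n)).
  { rewrite !pow_mult, <- Rpow_mult_distr. f_equal. field. lra. }
  rewrite Hpow, Hpow2.
  transitivity (cf v n * (PI / (2 * INR m)) ^ (2 * n) *
     ((PI / (2 * INR m)) ^ (2 * q) * sumR (seq 1 (m - 1)) (fun k => D (2 * q) (INR k * PI / (2 * INR m))))).
  { ring. }
  rewrite key by lia.
  unfold cf, Gamma_nat. rewrite Hq.
  pose proof (INR_fact_neq_0 (2 * v - 1)). field. split; auto. apply pow_nonzero; lra.
Qed.
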